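(* Let $A\in\mathcal{V}$ and let $\theta,\chi\in Con(A)$ with $\theta\vee\chi\neq\nabla_A$. If $\theta$ has $CBLP$ and $|B(Con(A/\chi))|\leq 2$, then $\theta\cap\chi$ has $CBLP$.
   Context: $\mathcal{V}$ is a congruence modular, semidegenerate variety (no nontrivial algebra has a one-element subalgebra) of finite signature. For $B\in\mathcal{V}$: $Con(B)$ is its congruence lattice with bounds $\Delta_B,\nabla_B$, $[\cdot,\cdot]$ the Freese–McKenzie commutator, $K(B)$ the compact congruences. A congruence $\phi\neq\nabla_B$ is prime if $[\alpha,\beta]\subseteq\phi$ implies $\alpha\subseteq\phi$ or $\beta\subseteq\phi$; $\rho(\theta)$ is the intersection of primes containing $\theta$. $B(Con(B))$ is the Boolean algebra of complemented elements of $Con(B)$. When $K(B)$ is closed under the commutator, the reticulation $L(B)=K(B)/{\equiv}$ ($\alpha\equiv\beta$ iff $\rho(\alpha)=\rho(\beta)$) is a bounded distributive lattice with canonical map $\lambda_B$, mapping $B(Con(B))$ injectively into $B(L(B))$; the reticulation preserves the Boolean center if this map is onto $B(L(B))$. Standing assumption: for every $B\in\mathcal{V}$, $K(B)$ is closed under the commutator and the reticulation of $B$ preserves the Boolean center. A congruence $\theta$ of $A$ has $CBLP$ if for every $\beta\in B(Con(A/\theta))$ there is $\alpha\in B(Con(A))$ with $(\alpha\vee\theta)/\theta=\beta$. *)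

(* Defs.v *)
From mathcomp Require Import ssreflect ssrfun ssrbool eqtype ssrnat seq fintype.
From Stdlib Require Import ClassicalEpsilon List.

Set Implicit Arguments.
Unset Strict Implicit.
Unset Printing Implicit Defensive.

Record signature := Signature { sym : finType; arity : sym -> nat }.

Record algebra (sg : signature) := Algebra {
  carrier :> Type;
  ops : forall f : sym sg, ('I_(arity f) -> carrier) -> carrier }.

Inductive term (sg : signature) : Type :=
| Var : nat -> term sg
| App : forall f : sym sg, ('I_(arity f) -> term sg) -> term sg.

Fixpoint eval (sg : signature) (A : algebra sg) (e : nat -> A) (t : term sg) : A :=
  match t with
  | Var n => e n
  | App f ts => @ops sg A f (fun i => eval e (ts i))
  end.

(* A variety = the class of models of a set of identities (Birkhoff). *)
Definition in_variety (sg : signature) (Sigma : term sg -> term sg -> Prop)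
  (A : algebra sg) : Prop :=
  forall s t, Sigma s t -> forall e : nat -> A, eval e s = eval e t.

Definition crel (T : Type) := T -> T -> Prop.

Definition cle (T : Type) (r s : crel T) := forall x y, r x y -> s x y.
Definition ceq (T : Type) (r s : crel T) := cle r s /\ cle s r.

Definition is_cong (sg : signature) (A : algebra sg) (r : crel A) : Prop :=
  (forall x, r x x) /\ (forall x y, r x y -> r y x) /\
  (forall x y z, r x y -> r y z -> r x z) /\
  (forall (f : sym sg) (a b : 'I_(arity f) -> A),
      (forall i, r (a i) (b i)) -> r (@ops sg A f a) (@ops sg A f b)).

Definition Delta (T : Type) : crel T := fun x y => x = y.
Definition Nabla (T : Type) : crel T := fun _ _ => True.

Definition cmeet (T : Type) (r s : crel T) : crel T := fun x y => r x y /\ s x y.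

Definition cjoin (sg : signature) (A : algebra sg) (r s : crel A) : crel A :=
  fun x y => forall c, is_cong c -> cle r c -> cle s c -> c x y.

Definition cbigjoin (sg : signature) (A : algebra sg) (S : crel A -> Prop) : crel A :=
  fun x y => forall c, is_cong c -> (forall r, S r -> cle r c) -> c x y.

Definition clistjoin (sg : signature) (A : algebra sg) (l : list (crel A)) : crel A :=
  cbigjoin (fun r => In r l).

Definition compact (sg : signature) (A : algebra sg) (a : crel A) : Prop :=
  is_cong a /\
  forall S : crel A -> Prop, (forall r, S r -> is_cong r) ->
    cle a (cbigjoin S) ->
    exists l : list (crel A), (forall r, In r l -> S r) /\ cle a (clistjoin l).

(* Term condition C(alpha, beta; delta): for every term t(xs, ys),
   xs-tuples a alpha b, ys-tuples c beta d,
   t(a,c) delta t(a,d) implies t(b,c) delta t(b,d).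
   The variables are split into the x-group and y-group by P. *)
Definition mix (T : Type) (P : nat -> bool) (u v : nat -> T) : nat -> T :=
  fun i => if P i then u i else v i.

Definition TC (sg : signature) (A : algebra sg) (alpha beta delta : crel A) : Prop :=
  forall (t : term sg) (P : nat -> bool) (a b c d : nat -> A),
    (forall i, alpha (a i) (b i)) -> (forall i, beta (c i) (d i)) ->
    delta (eval (mix P a c) t) (eval (mix P a d) t) ->
    delta (eval (mix P b c) t) (eval (mix P b d) t).

Definition comm (sg : signature) (A : algebra sg) (alpha beta : crel A) : crel A :=
  fun x y => forall delta, is_cong delta -> TC alpha beta delta -> delta x y.

Definition prime_cong (sg : signature) (A : algebra sg) (phi : crel A) : Prop :=
  is_cong phi /\ ~ cle (@Nabla A) phi /\
  forall alpha beta, is_cong alpha -> is_cong beta ->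
    cle (comm alpha beta) phi -> cle alpha phi \/ cle beta phi.

Definition rho (sg : signature) (A : algebra sg) (theta : crel A) : crel A :=
  fun x y => forall phi, prime_cong phi -> cle theta phi -> phi x y.

Definition complemented (sg : signature) (A : algebra sg) (a : crel A) : Prop :=
  is_cong a /\ exists b, is_cong b /\
    ceq (cmeet a b) (@Delta A) /\ ceq (cjoin a b) (@Nabla A).

(* Reticulation L(A) = K(A)/~ with kappa ~ kappa' iff rho kappa = rho kappa';
   lambda_A(kappa) = class of kappa; its lattice operations are
   lambda(a) /\ lambda(b) = lambda([a,b]), lambda(a) \/ lambda(b) = lambda(a \/ b),
   0 = lambda(Delta), 1 = lambda(Nabla).
   ret_complemented kappa : lambda_A(kappa) belongs to B(L(A)). *)
Definition ret_complemented (sg : signature) (A : algebra sg) (k : crel A) : Prop :=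
  compact k /\ exists k', compact k' /\
    ceq (rho (comm k k')) (rho (@Delta A)) /\
    ceq (rho (cjoin k k')) (rho (@Nabla A)).

(* the reticulation preserves the Boolean center:
   lambda_A restricted to B(Con(A)) is onto B(L(A)) *)
Definition ret_preserves_boolean_center (sg : signature) (A : algebra sg) : Prop :=
  forall k : crel A, ret_complemented k ->
    exists a, complemented a /\ compact a /\ ceq (rho a) (rho k).

Definition compacts_closed_under_comm (sg : signature) (A : algebra sg) : Prop :=
  forall a b : crel A, compact a -> compact b -> compact (comm a b).

Definition congruence_modular (sg : signature) (Sigma : term sg -> term sg -> Prop) :=
  forall B : algebra sg, in_variety Sigma B ->
    forall a b c : crel B, is_cong a -> is_cong b -> is_cong c -> cle a c ->
      ceq (cmeet (cjoin a b) c) (cjoin a (cmeet b c)).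

(* no nontrivial algebra of the variety has a one-element subalgebra *)
Definition semidegenerate (sg : signature) (Sigma : term sg -> term sg -> Prop) :=
  forall B : algebra sg, in_variety Sigma B ->
    forall b : B,
      (forall (f : sym sg) (args : 'I_(arity f) -> B),
          (forall i, args i = b) -> @ops sg B f args = b) ->
      forall x y : B, x = y.

Definition standing_assumption (sg : signature) (Sigma : term sg -> term sg -> Prop) :=
  forall B : algebra sg, in_variety Sigma B ->
    compacts_closed_under_comm B /\ ret_preserves_boolean_center B.

(* Quotient algebra A/theta: carrier = classes of theta; operations act on
   chosen representatives (well defined when theta is a congruence). *)
Definition class (T : Type) (theta : crel T) (a : T) : T -> Prop := theta a.

Definition quot_carrier (sg : signature) (A : algebra sg) (theta : crel A) :=
  { X : A -> Prop | exists a, X = class theta a }.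

Definition repr (sg : signature) (A : algebra sg) (theta : crel A)
  (X : quot_carrier theta) : A :=
  proj1_sig (constructive_indefinite_description _ (proj2_sig X)).

Definition cls (sg : signature) (A : algebra sg) (theta : crel A) (a : A) :
  quot_carrier theta := exist _ (class theta a) (ex_intro _ a erefl).

Definition quot (sg : signature) (A : algebra sg) (theta : crel A) : algebra sg :=
  @Algebra sg (quot_carrier theta)
    (fun f xs => cls theta (@ops sg A f (fun i => repr (xs i)))).

(* theta has CBLP: every beta in B(Con(A/theta)) equals (alpha \/ theta)/theta
   for some alpha in B(Con(A)); (alpha \/ theta)/theta relates the classes of
   x and y iff x (alpha \/ theta) y. *)
Definition CBLP (sg : signature) (A : algebra sg) (theta : crel A) : Prop :=
  forall beta : crel (quot theta), complemented beta ->
    exists alpha : crel A, complemented alpha /\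
      forall X Y : quot theta, beta X Y <-> cjoin alpha theta (repr X) (repr Y).

(* |B(Con(B))| <= 2 (congruences identified up to extensional equality) *)
Definition boolean_center_le2 (sg : signature) (B : algebra sg) : Prop :=
  forall b1 b2 b3 : crel B, complemented b1 -> complemented b2 -> complemented b3 ->
    ceq b1 b2 \/ ceq b1 b3 \/ ceq b2 b3.

(* Main.v *)
Require Import Defs.
From mathcomp Require Import ssreflect ssrfun ssrbool eqtype ssrnat seq fintype bigop.
From Stdlib Require Import FunctionalExtensionality PropExtensionality ProofIrrelevance ClassicalEpsilon.

Set Implicit Arguments.
Unset Strict Implicit.
Unset Printing Implicit Defensive.

Lemma sig_eq (T : Type) (P : T -> Prop) (u v : sig P) : proj1_sig u = proj1_sig v -> u = v.
Proof. case: u => x px; case: v => y py /= exy; subst y; f_equal; apply: proof_irrelevance. Qed.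

Section Lat.
Variable sg : signature.
Variable B : algebra sg.
Implicit Types r s c : crel B.

Lemma cong_refl c : is_cong c -> forall x, c x x.
Proof. by case. Qed.
Lemma cong_sym c : is_cong c -> forall x y, c x y -> c y x.
Proof. by case=> _ []. Qed.
Lemma cong_trans c : is_cong c -> forall x y z, c x y -> c y z -> c x z.
Proof. by case=> _ [] _ []. Qed.
Lemma cong_ops c : is_cong c -> forall (f : sym sg) (a b : 'I_(arity f) -> B),
      (forall i, c (a i) (b i)) -> c (ops a) (ops b).
Proof. by case=> _ [] _ []. Qed.

Lemma cjoin_cong r s : is_cong (cjoin r s).
Proof.
split; [|split; [|split]].
- by move=> x c [Hr _].
- by move=> x y H c Hc Hr Hs; apply: (cong_sym Hc); apply: H.
- by move=> x y z H1 H2 c Hc Hr Hs; apply: (cong_trans Hc (y:=y)); [apply: H1|apply: H2].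
- move=> f a b H c Hc Hr Hs; apply: (cong_ops Hc) => i; exact: H.
Qed.

Lemma cjoin_l r s : cle r (cjoin r s).
Proof. by move=> x y H c _ Hr _; apply: Hr. Qed.
Lemma cjoin_r r s : cle s (cjoin r s).
Proof. by move=> x y H c _ _ Hs; apply: Hs. Qed.
Lemma cjoin_min r s c : is_cong c -> cle r c -> cle s c -> cle (cjoin r s) c.
Proof. by move=> Hc Hr Hs x y H; apply: H. Qed.
Lemma cjoin_comm r s : cle (cjoin r s) (cjoin s r).
Proof. apply: cjoin_min; [exact: cjoin_cong|exact: cjoin_r|exact: cjoin_l]. Qed.

Lemma cmeet_cong r s : is_cong r -> is_cong s -> is_cong (cmeet r s).
Proof.
move=> [r1 [r2 [r3 r4]]] [s1 [s2 [s3 s4]]]; split; [|split; [|split]].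
- by move=> x; split.
- by move=> x y [H1 H2]; split; auto.
- by move=> x y z [H1 H2] [H3 H4]; split; eauto.
- by move=> f a b H; split; [apply: r4|apply: s4] => i; case: (H i).
Qed.

Lemma Delta_cong : is_cong (@Delta B).
Proof.
unfold Delta; split; [|split; [|split]].
- by [].
- by intros; subst.
- by intros; subst.
- by move=> f a b H; congr ops; apply: functional_extensionality.
Qed.

Lemma Nabla_cong : is_cong (@Nabla B).
Proof. by split; [|split; [|split]]. Qed.

End Lat.

Section Quot.
Variable sg : signature.
Variable B : algebra sg.
Variable k : crel B.
Hypothesis Hk : is_cong k.

Lemma repr_class (X : quot_carrier k) : proj1_sig X = class k (repr X).
Proof. exact: (proj2_sig (constructive_indefinite_description _ (proj2_sig X))). Qed.

Lemma cls_repr (X : quot_carrier k) : cls k (repr X) = X.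
Proof. by apply: sig_eq; rewrite /= -repr_class. Qed.

Lemma cls_eq x y : k x y -> cls k x = cls k y.
Proof.
move=> H; apply: sig_eq => /=; apply: functional_extensionality => z.
apply: propositional_extensionality; rewrite /class; split => H2.
- exact: (cong_trans Hk (cong_sym Hk H) H2).
- exact: (cong_trans Hk H H2).
Qed.

Lemma cls_inj x y : cls k x = cls k y -> k x y.
Proof.
move=> H; have := f_equal (@proj1_sig _ _) H => /= H2.
have := f_equal (fun P => P y) H2; rewrite /class => ->; exact: cong_refl.
Qed.

Lemma repr_cls x : k x (repr (cls k x)).
Proof. apply: cong_sym => //; apply: cls_inj; exact: cls_repr. Qed.

Lemma ops_cls (f : sym sg) (xs : 'I_(arity f) -> B) :
  @ops sg (quot k) f (fun i => cls k (xs i)) = cls k (ops xs).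
Proof.
rewrite /=; apply: cls_eq; apply: cong_ops => // i.
apply: cong_sym => //; exact: repr_cls.
Qed.

Lemma eval_quot (e : nat -> quot k) t :
  eval e t = cls k (eval (fun i => repr (e i)) t).
Proof.
elim: t => [n|f ts IH] /=; first by rewrite cls_repr.
apply: cls_eq; apply: cong_ops => // i; rewrite IH.
apply: cong_sym => //; exact: repr_cls.
Qed.

Lemma quot_variety Sigma : in_variety Sigma B -> in_variety Sigma (quot k).
Proof. by move=> HB s t Hst e; rewrite !eval_quot (HB s t Hst). Qed.

Definition lift (R : crel B) : crel (quot k) := fun X Y => R (repr X) (repr Y).

Lemma lift_cong R : is_cong R -> cle k R -> is_cong (lift R).
Proof.
move=> HR HkR; rewrite /lift; split; [|split; [|split]].
- by move=> x; apply: cong_refl.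
- by move=> x y; apply: cong_sym.
- by move=> x y z; apply: cong_trans.
- move=> f a b H /=.
  apply: (cong_trans HR); first by apply: HkR; apply: cong_sym => //; apply: repr_cls.
  apply: (cong_trans HR); last by apply: HkR; apply: repr_cls.
  by apply: cong_ops.
Qed.

Lemma lift_cls R : is_cong R -> cle k R -> forall x y, lift R (cls k x) (cls k y) <-> R x y.
Proof.
move=> HR HkR x y; rewrite /lift; split => H.
- apply: (cong_trans HR); first by apply: HkR; apply: repr_cls.
  apply: (cong_trans HR H); apply: HkR; apply: cong_sym => //; apply: repr_cls.
- apply: (cong_trans HR); first by apply: HkR; apply: cong_sym => //; apply: repr_cls.
  apply: (cong_trans HR H); apply: HkR; apply: repr_cls.
Qed.

Definition pb (c : crel (quot k)) : crel B := fun x y => c (cls k x) (cls k y).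

Lemma pb_cong c : is_cong c -> is_cong (pb c).
Proof.
move=> Hc; rewrite /pb; split; [|split; [|split]].
- by move=> x; apply: (cong_refl Hc).
- by move=> x y; apply: (cong_sym Hc).
- by move=> x y z; apply: (cong_trans Hc).
- by move=> f a b H; rewrite -(ops_cls a) -(ops_cls b); apply: (cong_ops Hc) => i; apply: H.
Qed.

Lemma pb_k c : is_cong c -> cle k (pb c).
Proof. by move=> Hc x y H; rewrite /pb (cls_eq H); apply: (cong_refl Hc). Qed.

Lemma pb_repr c X Y : c X Y <-> pb c (repr X) (repr Y).
Proof. by rewrite /pb !cls_repr. Qed.

Lemma img_compl R S : is_cong R -> is_cong S -> cle k R -> cle k S ->
  cle (@Nabla B) (cjoin R S) -> cle (cmeet R S) k -> complemented (lift R).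
Proof.
move=> HR HS HkR HkS HJ HM; split; first exact: lift_cong.
exists (lift S); split; first exact: lift_cong.
split; split.
- move=> X Y [H1 H2]; rewrite /Delta -(cls_repr X) -(cls_repr Y); apply: cls_eq; exact: HM.
- move=> X Y; rewrite /Delta => ->; split; [exact: (cong_refl HR)|exact: (cong_refl HS)].
- by [].
- move=> X Y _ c Hc H1 H2; apply/pb_repr.
  apply: (HJ _ _ I); first exact: pb_cong.
  + move=> x y Hxy; apply: H1; apply/lift_cls => //.
  + move=> x y Hxy; apply: H2; apply/lift_cls => //.
Qed.

End Quot.


Inductive star (T : Type) (R : crel T) : crel T :=
| st_refl x : star R x x
| st_step x y z : R x y -> star R y z -> star R x z.

Lemma star_trans T (R : crel T) x y z : star R x y -> star R y z -> star R x z.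
Proof. elim=> [//|a b c Hab _ IH] H; apply: st_step Hab (IH H). Qed.

Lemma star_one T (R : crel T) x y : R x y -> star R x y.
Proof. move=> H; apply: st_step H (st_refl _ _). Qed.

Lemma star_sym T (R : crel T) : (forall x y, R x y -> R y x) ->
  forall x y, star R x y -> star R y x.
Proof.
move=> HR x y; elim=> [a|a b c Hab _ IH]; first exact: st_refl.
apply: star_trans IH (star_one (HR _ _ Hab)).
Qed.

Definition upd (T : Type) n (z : 'I_n -> T) (j : 'I_n) (u : T) : 'I_n -> T :=
  fun i => if i == j then u else z i.

Section Star.
Variable sg : signature.
Variable A : algebra sg.

Lemma star_ops (R : crel A) :
  (forall f (z : 'I_(arity f) -> A) j u v, R u v -> R (ops (upd z j u)) (ops (upd z j v))) ->
  forall f (x y : 'I_(arity f) -> A), (forall i, star R (x i) (y i)) -> star R (ops x) (ops y).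
Proof.
move=> HR f x y Hxy.
have H1 : forall (z : 'I_(arity f) -> A) j u v, star R u v -> star R (ops (upd z j u)) (ops (upd z j v)).
  move=> z j u v; elim=> [a|a b c Hab _ IH]; first exact: st_refl.
  exact: st_step (HR _ _ _ _ _ Hab) IH.
pose zm m := fun i : 'I_(arity f) => if i < m then y i else x i.
have H2 : forall m, m <= arity f -> star R (ops x) (ops (zm m)).
  elim=> [|m IH] Hm.
    have -> : zm 0 = x by apply: functional_extensionality => i.
    exact: st_refl.
  have Hm' : m < arity f by [].
  pose j := Ordinal Hm'.
  have E1 : zm m = upd (zm m) j (x j).
    apply: functional_extensionality => i; rewrite /upd /zm.
    have [->|Hne] := eqVneq i j; first by rewrite /= ltnn.
    by [].
  have E2 : zm m.+1 = upd (zm m) j (y j).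
    apply: functional_extensionality => i; rewrite /upd /zm ltnS leq_eqVlt.
    have [->|Hne] := eqVneq i j; first by rewrite /= eqxx.
    have -> : (nat_of_ord i == m) = false.
      by apply/negP => /eqP Him; move/eqP: Hne; apply; apply: ord_inj.
    by [].
  apply: star_trans (IH (ltnW Hm)) _; rewrite E2 {1}E1; exact: H1.
have -> : y = zm (arity f).
  by apply: functional_extensionality => i; rewrite /zm ltn_ord.
exact: H2.
Qed.

Lemma upd_rel (R : crel A) : is_cong R ->
  forall f (z : 'I_(arity f) -> A) j u v, R u v -> R (ops (upd z j u)) (ops (upd z j v)).
Proof.
move=> HR f z j u v H; apply: (cong_ops HR) => i; rewrite /upd.
case: (i == j) => //; exact: (cong_refl HR).
Qed.

Lemma star_cong (R : crel A) : (forall x, R x x) -> (forall x y, R x y -> R y x) ->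
  (forall f (z : 'I_(arity f) -> A) j u v, R u v -> R (ops (upd z j u)) (ops (upd z j v))) ->
  is_cong (star R).
Proof.
move=> Hr Hs Hc; split; [|split; [|split]].
- move=> x; exact: st_refl.
- exact: star_sym.
- move=> x y z; exact: star_trans.
- exact: star_ops.
Qed.

Lemma eval_cong (R : crel A) : is_cong R -> forall (e e' : nat -> A) t,
  (forall i, R (e i) (e' i)) -> R (eval e t) (eval e' t).
Proof.
move=> HR e e' t H; elim: t => [n|f ts IH] /=; first exact: H.
exact: (cong_ops HR).
Qed.

Fixpoint tb (t : term sg) : nat :=
  match t with Var n => n.+1 | App f ts => \max_(i < arity f) tb (ts i) end.

Lemma tb_spec t (e e' : nat -> A) : (forall i, i < tb t -> e i = e' i) -> eval e t = eval e' t.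
Proof.
elim: t => [n|f ts IH] /= H; first by apply: H.
congr ops; apply: functional_extensionality => i; apply: IH => m Hm; apply: H.
apply: (leq_trans Hm).
exact: (@leq_bigmax _ (fun i0 => tb (ts i0)) i).
Qed.

Fixpoint rename (r : nat -> nat) (t : term sg) : term sg :=
  match t with Var n => Var sg (r n) | App f ts => @App sg f (fun i => rename r (ts i)) end.

Lemma eval_rename r (e : nat -> A) t : eval e (rename r t) = eval (fun i => e (r i)) t.
Proof.
elim: t => [n|f ts IH] //=; congr ops; apply: functional_extensionality => i; exact: IH.
Qed.

End Star.


Section Central.
Variable sg : signature.
Variable B : algebra sg.
Variable chi : crel B.
Hypothesis Hchi : is_cong chi.

Definition subC : algebra sg :=
  @Algebra sg {p : B * B | chi p.1 p.2}
    (fun f xs => exist (fun p : B * B => chi p.1 p.2)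
       (ops (fun i => (proj1_sig (xs i)).1), ops (fun i => (proj1_sig (xs i)).2))
       (cong_ops Hchi (fun i => proj2_sig (xs i)))).

Lemma eval_sub (e : nat -> subC) t :
  proj1_sig (eval e t) = (eval (fun i => (proj1_sig (e i)).1) t, eval (fun i => (proj1_sig (e i)).2) t).
Proof.
elim: t => [n|f ts IH] /=; first by case: (proj1_sig (e n)).
congr pair; congr ops; apply: functional_extensionality => i; by rewrite IH.
Qed.

Lemma sub_variety Sigma : in_variety Sigma B -> in_variety Sigma subC.
Proof.
move=> HB s t Hst e; apply: sig_eq; rewrite !eval_sub.
by rewrite (HB s t Hst (fun i => (proj1_sig (e i)).1)) (HB s t Hst (fun i => (proj1_sig (e i)).2)).
Qed.

Definition Mrel : crel subC := fun p q =>
  exists t P a b c d, (forall i, chi (c i) (d i)) /\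
    proj1_sig p = (eval (mix P a c) t, eval (mix P a d) t) /\
    proj1_sig q = (eval (mix P b c) t, eval (mix P b d) t).

Lemma Mrel_refl p : Mrel p p.
Proof.
case: p => [[u v] H]; exists (Var sg 0), (fun _ => false), (fun _ => u), (fun _ => u),
  (fun _ => u), (fun _ => v); split => //.
Qed.

Lemma Mrel_sym p q : Mrel p q -> Mrel q p.
Proof.
case=> t [P [a [b [c [d [H1 [H2 H3]]]]]]].
by exists t, P, b, a, c, d.
Qed.

Lemma Mrel_diag (p q : subC) : (proj1_sig p).1 = (proj1_sig p).2 ->
  (proj1_sig q).1 = (proj1_sig q).2 -> Mrel p q.
Proof.
case: p => [[u u'] Hu]; case: q => [[w w'] Hw] /= E1 E2; subst u' w'.
exists (Var sg 0), (fun _ => true), (fun _ => u), (fun _ => w), (fun _ => u), (fun _ => u).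
split; [move=> i; exact: (cong_refl Hchi)|split => //].
Qed.

Lemma Mrel_upd f (z : 'I_(arity f) -> subC) j p q :
  Mrel p q -> Mrel (ops (upd z j p)) (ops (upd z j q)).
Proof.
case=> t [P [a [b [c [d [Hcd [Hp Hq]]]]]]].
set n := arity f.
pose P' i := if i < n then false else P (i - n).
pose a' i := a (i - n).
pose b' i := b (i - n).
pose c' i := if i < n then (proj1_sig (z (insubd j i))).1 else c (i - n).
pose d' i := if i < n then (proj1_sig (z (insubd j i))).2 else d (i - n).
pose t' := @App sg f (fun i => if i == j then rename (addn n) t else Var sg i).
have Hmix : forall (a1 c1 : nat -> B),
   (fun i => mix P' (fun i => a1 (i - n)) (fun i => if i < n then (proj1_sig (z (insubd j i))).1 else c1 (i - n)) (n + i)) = mix P a1 c1.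
  by move=> a1 c1; apply: functional_extensionality => i; rewrite /mix /P' ltnNge leq_addr /= addKn.
have Hmix2 : forall (a1 c1 : nat -> B),
   (fun i => mix P' (fun i => a1 (i - n)) (fun i => if i < n then (proj1_sig (z (insubd j i))).2 else c1 (i - n)) (n + i)) = mix P a1 c1.
  by move=> a1 c1; apply: functional_extensionality => i; rewrite /mix /P' ltnNge leq_addr /= addKn.
exists t', P', a', b', c', d'; split.
  move=> i; rewrite /c' /d'; case: (i < n) => //; exact: (proj2_sig (z _)).
split.
- rewrite /= /t' /=; congr pair; congr ops; apply: functional_extensionality => i;
  rewrite /upd; case: (i == j).
  + by rewrite eval_rename /a' /c' Hmix Hp.
  + by rewrite /= /mix /P' /c' ltn_ord valKd.
  + by rewrite eval_rename /a' /d' Hmix2 Hp.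
  + by rewrite /= /mix /P' /d' ltn_ord valKd.
- rewrite /= /t' /=; congr pair; congr ops; apply: functional_extensionality => i;
  rewrite /upd; case: (i == j).
  + by rewrite eval_rename /b' /c' Hmix Hq.
  + by rewrite /= /mix /P' /c' ltn_ord valKd.
  + by rewrite eval_rename /b' /d' Hmix2 Hq.
  + by rewrite /= /mix /P' /d' ltn_ord valKd.
Qed.

Definition Theta := star Mrel.

Lemma Theta_cong : is_cong Theta.
Proof.
apply: star_cong; [exact: Mrel_refl|exact: Mrel_sym|].
move=> f z j u v; exact: Mrel_upd.
Qed.

Lemma central_trivial Sigma : in_variety Sigma B -> semidegenerate Sigma ->
  TC (@Nabla B) chi (@Delta B) -> forall x y, chi x y -> x = y.
Proof.
move=> HB Hsd HTC x y Hxy.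
have HM : forall p q, Mrel p q -> (proj1_sig p).1 = (proj1_sig p).2 -> (proj1_sig q).1 = (proj1_sig q).2.
  move=> p q [t [P [a [b [c [d [Hcd [Hp Hq]]]]]]]]; rewrite Hp Hq /= => E.
  exact: (HTC t P a b c d (fun _ => I) Hcd E).
have HT : forall p q, Theta p q -> (proj1_sig p).1 = (proj1_sig p).2 -> (proj1_sig q).1 = (proj1_sig q).2.
  move=> p q; elim=> // a b c Hab _ IH E; apply: IH; exact: HM Hab E.
pose p0 : subC := exist (fun p : B * B => chi p.1 p.2) (x, x) (cong_refl Hchi x).
pose p1 : subC := exist (fun p : B * B => chi p.1 p.2) (x, y) Hxy.
have HQ := quot_variety Theta_cong (sub_variety HB).
have := Hsd _ HQ (cls Theta p0).
have Hid : forall (f : sym sg) (args : 'I_(arity f) -> quot Theta),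
    (forall i, args i = cls Theta p0) -> ops args = cls Theta p0.
  move=> f args Hargs /=.
  apply: cls_eq; first exact: Theta_cong.
  apply: (cong_trans Theta_cong (y := ops (fun _ : 'I_(arity f) => p0))).
    apply: (cong_ops Theta_cong) => i; rewrite Hargs.
    apply: (cong_sym Theta_cong); exact: repr_cls Theta_cong p0.
  apply: star_one; apply: Mrel_diag => //.
move=> /(_ Hid (cls Theta p1) (cls Theta p0)) /(cls_inj Theta_cong) H.
have := HT _ _ (cong_sym Theta_cong H) erefl; done.
Qed.

End Central.

Section Join.
Variable sg : signature.
Variable B : algebra sg.

Lemma TC_meet (be chi : crel B) : is_cong be -> is_cong chi ->
  cle (cmeet be chi) (@Delta B) -> TC be chi (@Delta B).
Proof.
move=> Hb Hc HM t P a b c d Hab Hcd E; apply: HM; split.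
- apply: (cong_trans Hb (y := eval (mix P a c) t)).
    apply: eval_cong => // i; rewrite /mix; case: (P i); [exact: (cong_sym Hb)|exact: (cong_refl Hb)].
  rewrite E; apply: eval_cong => // i; rewrite /mix; case: (P i); [exact: Hab|exact: (cong_refl Hb)].
- apply: eval_cong => // i; rewrite /mix; case: (P i); [exact: (cong_refl Hc)|exact: Hcd].
Qed.

Definition updn (a : nat -> B) i w := fun j => if j == i then w else a j.

Lemma TC_join (be ga chi : crel B) : is_cong be -> is_cong ga ->
  TC be chi (@Delta B) -> TC ga chi (@Delta B) ->
  (forall x y, star (fun u v => be u v \/ ga u v) x y) -> TC (@Nabla B) chi (@Delta B).
Proof.
move=> Hb Hg Tb Tg Hall t P a b c d _ Hcd.
pose eqa a := eval (mix P a c) t = eval (mix P a d) t.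
have single : forall u w, star (fun u v => be u v \/ ga u v) u w ->
    forall a i, a i = u -> eqa a -> eqa (updn a i w).
  move=> u w; elim=> [x|x y z Hxy _ IH] a1 i Hai Heq.
    have -> : updn a1 i x = a1.
      by apply: functional_extensionality => j; rewrite /updn; case: eqP => // ->.
    done.
  have H1 : eqa (updn a1 i y).
    case: Hxy => Hxy.
    - apply: (Tb t P a1 _ c d _ Hcd Heq) => j; rewrite /updn.
      case: eqP => [->|_]; [by rewrite Hai|exact: (cong_refl Hb)].
    - apply: (Tg t P a1 _ c d _ Hcd Heq) => j; rewrite /updn.
      case: eqP => [->|_]; [by rewrite Hai|exact: (cong_refl Hg)].
  have := IH (updn a1 i y) i; rewrite /updn eqxx => /(_ erefl H1).
  have -> : (fun j => if j == i then z else if j == i then y else a1 j) = updn a1 i z.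
    by apply: functional_extensionality => j; rewrite /updn; case: (j == i).
  done.
pose bm m := fun j => if j < m then b j else a j.
have Hbm : forall m, eqa a -> eqa (bm m).
  elim=> [|m IH] Ha.
    have -> : bm 0 = a by apply: functional_extensionality => j.
    done.
  have -> : bm m.+1 = updn (bm m) m (b m).
    apply: functional_extensionality => j; rewrite /bm /updn ltnS leq_eqVlt.
    by case: eqP => [->|].
  exact: (single (bm m m) (b m) (Hall _ _) (bm m) m erefl (IH Ha)).
move=> Ha; have := Hbm (tb t) Ha; rewrite /eqa.
rewrite (tb_spec (e := mix P (bm (tb t)) c) (e' := mix P b c)); last first.
  by move=> i Hi; rewrite /mix /bm Hi.
rewrite (tb_spec (e := mix P (bm (tb t)) d) (e' := mix P b d)) //.
by move=> i Hi; rewrite /mix /bm Hi.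
Qed.

Lemma join_star (be ga : crel B) : is_cong be -> is_cong ga ->
  cle (@Nabla B) (cjoin be ga) -> forall x y, star (fun u v => be u v \/ ga u v) x y.
Proof.
move=> Hb Hg HJ x y; apply: (HJ x y I).
- apply: star_cong.
  + move=> u; left; exact: (cong_refl Hb).
  + by move=> u v [H|H]; [left; exact: (cong_sym Hb)|right; exact: (cong_sym Hg)].
  + move=> f z j u v [H|H]; [left; exact: upd_rel|right; exact: upd_rel].
- by move=> u v H; apply: star_one; left.
- by move=> u v H; apply: star_one; right.
Qed.

Lemma Lzero Sigma : in_variety Sigma B -> semidegenerate Sigma ->
  forall be ga chi : crel B, is_cong be -> is_cong ga -> is_cong chi ->
  cle (@Nabla B) (cjoin be ga) -> cle (cmeet be chi) (@Delta B) ->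
  cle (cmeet ga chi) (@Delta B) -> cle chi (@Delta B).
Proof.
move=> HB Hsd be ga chi Hb Hg Hc HJ H1 H2 x y Hxy.
apply: (central_trivial Hc HB Hsd _ Hxy).
apply: (TC_join Hb Hg); [exact: TC_meet|exact: TC_meet|exact: join_star].
Qed.

End Join.


Section AlgV.
Variable sg : signature.
Variable Sigma : term sg -> term sg -> Prop.
Hypothesis HCM : congruence_modular Sigma.
Hypothesis Hsd : semidegenerate Sigma.
Variable B : algebra sg.
Hypothesis HB : in_variety Sigma B.

Lemma modl (a b c : crel B) : is_cong a -> is_cong b -> is_cong c -> cle a c ->
  cle (cmeet (cjoin a b) c) (cjoin a (cmeet b c)).
Proof. move=> Ha Hb Hc Hac; exact: (HCM HB Ha Hb Hc Hac).1. Qed.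

Lemma Ldelta (be ga chi de : crel B) : is_cong be -> is_cong ga -> is_cong chi -> is_cong de ->
  cle (@Nabla B) (cjoin be ga) -> cle de chi -> cle (cmeet be chi) de ->
  cle (cmeet ga chi) de -> cle chi de.
Proof.
move=> Hb Hg Hc Hd HJ Hdc H1 H2.
have HQ := quot_variety Hd HB.
have L1 : is_cong (@lift _ _ de (cjoin de be)) by apply: lift_cong => //; [exact: cjoin_cong|exact: cjoin_l].
have L2 : is_cong (@lift _ _ de (cjoin de ga)) by apply: lift_cong => //; [exact: cjoin_cong|exact: cjoin_l].
have L3 : is_cong (@lift _ _ de chi) by apply: lift_cong.
have HJQ : cle (@Nabla _) (cjoin (@lift _ _ de (cjoin de be)) (@lift _ _ de (cjoin de ga))).
  move=> X Y _ c Hc' K1 K2; apply/pb_repr.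
  apply: (HJ _ _ I); first exact: pb_cong.
  - move=> x y Hxy; apply: K1; apply/(lift_cls Hd) => //; [exact: cjoin_cong|exact: cjoin_l|exact: cjoin_r].
  - move=> x y Hxy; apply: K2; apply/(lift_cls Hd) => //; [exact: cjoin_cong|exact: cjoin_l|exact: cjoin_r].
have meetQ : forall r (Hr : is_cong r), cle (cmeet r chi) de ->
    cle (cmeet (@lift _ _ de (cjoin de r)) (@lift _ _ de chi)) (@Delta _).
  move=> r Hr Hm X Y [K1 K2]; rewrite /Delta -(cls_repr X) -(cls_repr Y); apply: cls_eq => //.
  have := modl Hd Hr Hc Hdc (conj K1 K2).
  apply: cjoin_min => //; exact: Hm.
have := Lzero HQ Hsd L1 L2 L3 HJQ (meetQ _ Hb H1) (meetQ _ Hg H2).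
move=> HZ x y Hxy; apply: (cls_inj Hd); apply: HZ; apply/(lift_cls Hd) => //.
Qed.

Lemma Dist (be ga chi : crel B) : is_cong be -> is_cong ga -> is_cong chi ->
  cle (@Nabla B) (cjoin be ga) -> cle chi (cjoin (cmeet be chi) (cmeet ga chi)).
Proof.
move=> Hb Hg Hc HJ; apply: (Ldelta Hb Hg Hc _ HJ).
- exact: cjoin_cong.
- apply: cjoin_min => //; by move=> x y [].
- exact: cjoin_l.
- exact: cjoin_r.
Qed.

Lemma MeetJoin (be ga ka : crel B) : is_cong be -> is_cong ga -> is_cong ka ->
  cle (@Nabla B) (cjoin be ga) -> cle (cmeet be ga) ka -> cle (cmeet be (cjoin ga ka)) ka.
Proof.
move=> Hb Hg Hk HJ HM x y [K1 K2].
have Hka := Dist Hb Hg Hk HJ.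
have Hle : cle (cjoin ga ka) (cjoin (cmeet be ka) ga).
  apply: cjoin_min; [exact: cjoin_cong|exact: cjoin_r|].
  move=> u v H; have := Hka u v H; apply: cjoin_min; [exact: cjoin_cong|exact: cjoin_l|].
  move=> u' v' [H1 _]; exact: cjoin_r.
have := modl (cmeet_cong Hb Hk) Hg Hb (fun u v (H : cmeet be ka u v) => proj1 H) (conj (Hle _ _ K2) K1).
apply: cjoin_min => //; first by move=> u v [].
by move=> u v [H1 H2]; apply: HM.
Qed.

Lemma Img (be ga ka : crel B) : is_cong be -> is_cong ga -> is_cong ka ->
  cle (@Nabla B) (cjoin be ga) -> cle (cmeet be ga) ka ->
  cle (cmeet (cjoin be ka) (cjoin ga ka)) ka.
Proof.
move=> Hb Hg Hk HJ HM.
apply: (Ldelta Hb Hg _ Hk HJ).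
- apply: cmeet_cong; exact: cjoin_cong.
- by move=> x y H; split; apply: cjoin_r.
- move=> x y [H1 [H2 H3]]; exact: (MeetJoin Hb Hg Hk HJ HM (conj H1 H3)).
- move=> x y [H1 [H2 H3]].
  have HJ' : cle (@Nabla B) (cjoin ga be) by move=> u v _; apply: cjoin_comm; exact: HJ.
  have HM' : cle (cmeet ga be) ka by move=> u v [K1 K2]; apply: HM.
  exact: (MeetJoin Hg Hb Hk HJ' HM' (conj H1 H2)).
Qed.

End AlgV.

Section Unlift.
Variable sg : signature.
Variable B : algebra sg.
Variable k : crel B.
Hypothesis Hk : is_cong k.

Lemma unl_meet (be ga : crel (quot k)) : cle (cmeet be ga) (@Delta _) -> cle (cmeet (pb be) (pb ga)) k.
Proof. by move=> HM x y H; apply: (cls_inj Hk); apply: HM. Qed.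

Lemma unl_join (be ga : crel (quot k)) : is_cong be -> is_cong ga ->
  cle (@Nabla _) (cjoin be ga) -> cle (@Nabla B) (cjoin (pb be) (pb ga)).
Proof.
move=> Hb Hg HJ x y _ c Hc H1 H2.
have Hkc : cle k c by move=> u v H; apply: H1; apply: pb_k.
have Lc := lift_cong Hk Hc Hkc.
have : (@lift _ _ k c) (cls k x) (cls k y).
  apply: (HJ _ _ I) => //.
  - by move=> X Y H; apply: H1; rewrite /pb !cls_repr.
  - by move=> X Y H; apply: H2; rewrite /pb !cls_repr.
by move/(lift_cls Hk Hc Hkc).
Qed.

End Unlift.

Lemma Delta_compl sg (B : algebra sg) : complemented (@Delta B).
Proof.
split; first exact: Delta_cong.
exists (@Nabla B); split; first exact: Nabla_cong.
split; split.
- by move=> x y [].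
- by move=> x y H; split.
- by [].
- move=> x y _; exact: cjoin_r.
Qed.

Lemma Nabla_compl sg (B : algebra sg) : complemented (@Nabla B).
Proof.
split; first exact: Nabla_cong.
exists (@Delta B); split; first exact: Delta_cong.
split; split.
- by move=> x y [].
- by move=> x y H; split.
- by [].
- move=> x y _; exact: cjoin_l.
Qed.


Section Main.
Variable sg : signature.
Variable Sigma : term sg -> term sg -> Prop.
Hypothesis HCM : congruence_modular Sigma.
Hypothesis Hsd : semidegenerate Sigma.
Variable A : algebra sg.
Hypothesis HA : in_variety Sigma A.
Variables theta chi : crel A.
Hypothesis Htheta : is_cong theta.
Hypothesis Hchi : is_cong chi.
Hypothesis Hjoin : ~ ceq (cjoin theta chi) (@Nabla A).
Hypothesis Hcblp : CBLP theta.
Hypothesis Hb2 : boolean_center_le2 (quot chi).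

Let mu := cmeet theta chi.
Let Hmu : is_cong mu := cmeet_cong Htheta Hchi.

Lemma not_total r : cle r (cjoin theta chi) -> (forall x y, cjoin r chi x y) -> False.
Proof.
move=> Hr Ht; apply: Hjoin; split => // x y _.
apply: (cjoin_min (cjoin_cong _ _) Hr (@cjoin_r _ _ theta chi)); exact: Ht.
Qed.

Lemma chi_not_total : (forall x y, chi x y) -> False.
Proof. move=> Ht; apply: Hjoin; split => // x y _; apply: cjoin_r; exact: Ht. Qed.

Lemma join_mono (r s r' s' : crel A) : cle r r' -> cle s s' ->
  cle (cjoin r s) (cjoin r' s').
Proof.
move=> H1 H2; apply: cjoin_min; first exact: cjoin_cong.
- move=> x y H; apply: cjoin_l; exact: H1.
- move=> x y H; apply: cjoin_r; exact: H2.
Qed.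

Lemma Dichot (ep epc : crel A) : is_cong ep -> is_cong epc ->
  cle (@Nabla A) (cjoin ep epc) -> cle (cmeet ep epc) chi ->
  cle ep chi \/ (forall x y, cjoin ep chi x y) \/ (forall x y, chi x y).
Proof.
move=> He Hec HJ HM.
have Hc1 : is_cong (cjoin ep chi) by exact: cjoin_cong.
have Hc2 : is_cong (cjoin epc chi) by exact: cjoin_cong.
have Hcompl : complemented (@lift _ _ chi (cjoin ep chi)).
  apply: (img_compl Hchi Hc1 Hc2 (@cjoin_r _ _ _ _) (@cjoin_r _ _ _ _)).
  - move=> x y _; apply: (join_mono (@cjoin_l _ _ ep chi) (@cjoin_l _ _ epc chi)); exact: HJ.
  - exact: (Img HCM Hsd HA He Hec Hchi HJ HM).
case: (Hb2 (Delta_compl _) (Nabla_compl _) Hcompl) => [[_ H]|[[_ H]|[H _]]].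
- right; right => x y; apply: (cls_inj Hchi); exact: H.
- left => x y Hxy; apply: (cls_inj Hchi); apply: H; apply/(lift_cls Hchi Hc1 (@cjoin_r _ _ _ _)).
  exact: cjoin_l.
- right; left => x y; apply/(lift_cls Hchi Hc1 (@cjoin_r _ _ _ _)); exact: H.
Qed.

Lemma Case1 (be ga : crel A) : is_cong be -> is_cong ga -> cle mu be ->
  cle (@Nabla A) (cjoin be ga) -> cle (cmeet be ga) mu -> cle be chi ->
  exists al, complemented al /\ forall x y, be x y <-> cjoin al mu x y.
Proof.
move=> Hb Hg Hmb HJ HM Hbc.
have Hc1 : is_cong (cjoin be theta) by exact: cjoin_cong.
have Hc2 : is_cong (cjoin ga theta) by exact: cjoin_cong.
have HMt : cle (cmeet be ga) theta by move=> x y H; case: (HM x y H).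
have Hcompl : complemented (@lift _ _ theta (cjoin be theta)).
  apply: (img_compl Htheta Hc1 Hc2 (@cjoin_r _ _ _ _) (@cjoin_r _ _ _ _)).
  - move=> x y _; apply: (join_mono (@cjoin_l _ _ be theta) (@cjoin_l _ _ ga theta)); exact: HJ.
  - exact: (Img HCM Hsd HA Hb Hg Htheta HJ HMt).
case: (Hcblp Hcompl) => al [Hal Heq].
have Hacong : is_cong al by case: Hal.
have Hc3 : is_cong (cjoin al theta) by exact: cjoin_cong.
have Hequiv : forall x y, cjoin be theta x y <-> cjoin al theta x y.
  move=> x y; rewrite -(lift_cls Htheta Hc1 (@cjoin_r _ _ _ _)).
  rewrite -(lift_cls Htheta Hc3 (@cjoin_r _ _ _ _) x y); exact: Heq.
have Hale : cle al chi.
  case: Hal => _ [alc [Halc [[HM2 _] [_ HJ2]]]].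
  case: (Dichot Hacong Halc HJ2) => [x y H|//|[Ht|Ht]].
  - rewrite (HM2 x y H); exact: (cong_refl Hchi).
  - exfalso; apply: (not_total (r := al)) => // x y H.
    have := (Hequiv x y).2 (cjoin_l H).
    apply: cjoin_min; first exact: cjoin_cong.
    + move=> u v K; apply: cjoin_r; exact: Hbc.
    + exact: cjoin_l.
  - exfalso; exact: chi_not_total.
exists al; split => // x y; split => H.
- have H1 : cjoin al theta x y by apply/Hequiv; exact: cjoin_l.
  exact: (modl HCM HA Hacong Htheta Hchi Hale (conj H1 (Hbc _ _ H))).
- have : cle (cjoin al mu) be.
    apply: cjoin_min => // u v K.
    have H1 : cjoin be theta u v by apply/Hequiv; exact: cjoin_l.
    have := modl HCM HA Hb Htheta Hchi Hbc (conj H1 (Hale _ _ K)).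
    apply: cjoin_min => //.
  by apply.
Qed.

Lemma UniqL (ep be ga : crel A) : is_cong ep -> is_cong be -> is_cong ga -> cle mu ep ->
  cle (@Nabla A) (cjoin ep ga) -> cle (cmeet be ga) mu -> cle be ep.
Proof.
move=> He Hb Hg Hme HJ HM x y H.
have := Dist HCM Hsd HA He Hg Hb HJ H.
apply: cjoin_min => //; first by move=> u v [].
by move=> u v [K1 K2]; apply: Hme; apply: HM.
Qed.

Theorem main_prop : CBLP mu.
Proof.
move=> beta [Hbeta [gamma [Hgamma [[HM _] [_ HJ]]]]].
set be := pb beta; set ga := pb gamma.
have Hb : is_cong be by exact: pb_cong.
have Hg : is_cong ga by exact: pb_cong.
have Hmb : cle mu be by exact: pb_k.
have Hmg : cle mu ga by exact: pb_k.
have HMbg : cle (cmeet be ga) mu by exact: unl_meet.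
have HJbg : cle (@Nabla A) (cjoin be ga) by exact: unl_join.
have HMgb : cle (cmeet ga be) mu by move=> x y [K1 K2]; apply: HMbg.
have HJgb : cle (@Nabla A) (cjoin ga be) by move=> x y _; apply: cjoin_comm; exact: HJbg.
have HMc : forall r s, cle (cmeet r s) mu -> cle (cmeet r s) chi.
  by move=> r s H x y K; case: (H x y K).
suff [al [Hal Heq]] : exists al, complemented al /\ forall x y, be x y <-> cjoin al mu x y.
  exists al; split => // X Y; rewrite pb_repr; exact: Heq.
case: (Dichot Hb Hg HJbg (HMc _ _ HMbg)) => [Hbc|[Hbt|Hct]].
- exact: (Case1 Hb Hg Hmb HJbg HMbg Hbc).
- case: (Dichot Hg Hb HJgb (HMc _ _ HMgb)) => [Hgc|[Hgt|Hct]].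
  + case: (Case1 Hg Hb Hmg HJgb HMgb Hgc) => alg [Halg Heqg].
    case: (Halg) => Hgcong [alc [Hccong [[HM2 HM2'] [HJ2 HJ2']]]].
    have Halc : complemented alc.
      split => //; exists alg; split => //; split; split.
      - by move=> x y [K1 K2]; apply: HM2.
      - by move=> x y K; case: (HM2' x y K).
      - by [].
      - move=> x y _; apply: cjoin_comm; exact: HJ2'.
    exists alc; split => //.
    have Hep : is_cong (cjoin alc mu) by exact: cjoin_cong.
    have Hme : cle mu (cjoin alc mu) by exact: cjoin_r.
    have HJe : cle (@Nabla A) (cjoin (cjoin alc mu) ga).
      have Hag : cle alg ga by move=> u v K; apply/Heqg; exact: cjoin_l.
      move=> x y _; apply: cjoin_comm; exact: (join_mono Hag (@cjoin_l _ _ alc mu) (HJ2' x y I)).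
    have HMe : cle (cmeet (cjoin alc mu) ga) mu.
      move=> x y [K1 K2].
      apply: (Img HCM Hsd HA Hccong Hgcong Hmu (fun u v _ => cjoin_comm (HJ2' u v I))).
        move=> u v [L1 L2]; rewrite (HM2 u v (conj L2 L1)); exact: (cong_refl Hmu).
      by split => //; apply/Heqg.
    have HMe' : cle (cmeet ga (cjoin alc mu)) mu by move=> x y [K1 K2]; apply: HMe.
    move=> x y; split.
    * exact: (UniqL Hep Hb Hg Hme HJe HMbg).
    * exact: (UniqL Hb Hep Hg Hmb HJbg HMe).
  + exfalso; apply: chi_not_total => x y.
    apply: (Img HCM Hsd HA Hb Hg Hchi HJbg (HMc _ _ HMbg)); split; [exact: Hbt|exact: Hgt].
  + exfalso; exact: chi_not_total.
- exfalso; exact: chi_not_total.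
Qed.

End Main.

Theorem proposition6p7 (sg : signature) (Sigma : term sg -> term sg -> Prop)
  (HCM : congruence_modular Sigma) (Hsd : semidegenerate Sigma)
  (Hst : standing_assumption Sigma)
  (A : algebra sg) (HA : in_variety Sigma A)
  (theta chi : crel A) (Htheta : is_cong theta) (Hchi : is_cong chi)
  (Hjoin : ~ ceq (cjoin theta chi) (@Nabla A))
  (Hcblp : CBLP theta) (Hb2 : boolean_center_le2 (quot chi)) :
  CBLP (cmeet theta chi).
Proof.
exact: (main_prop HCM Hsd HA Htheta Hchi Hjoin Hcblp Hb2).
Qed.

Print Assumptions proposition6p7.
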